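(* Let $G$ be a graph on vertex set $[m]$, and let $k\ge1$. Let $y^0,\bar y^0,y^1,\bar y^1,\dots,y^{2k},\bar y^{2k}\in\mathrm{Stable}(G)$ be $4k+2$ pairwise distinct vectors satisfying $$y^i+\bar y^i=y^0+\bar y^0\quad\text{for all } i\in\{0,\dots,2k\}.$$ Define $I,J,j_0,U_i,S(i,j,t),y^*(S),\bar y^*(S)$ as in the context. Then for all $0\le i<j<t\le 2k$, both $y^*(S(i,j,t))$ and $\bar y^*(S(i,j,t))$ belong to $\mathrm{Stable}(G)$.
   Context: **Graph polytope.** For a graph $G=(V,E)$, $\mathrm{Stable}(G)=\{x\in\{0,1\}^V: x_u+x_v\le1 \text{ for every edge }\{u,v\}\in E\}$. **Index sets.** - $I=\{i\in[m]: y^0_i=\bar y^0_i\}$ and $J=[m]\setminus I=\{j: y^0_j+\bar y^0_j=1\}$. The set $J$ is nonempty. - Fix any $j_0\in J$. - For $i\in\{0,\dots,2k\}$, let $U_i=\{j\in J: y^i_j=1\}$ if $y^i_{j_0}=1$, and $U_i=\{j\in J:\bar y^i_j=1\}$ otherwise. - Let $\bar U_i=J\setminus U_i$. - For $0\le i<j<t\le2k$, let $S(i,j,t)=U_i\,\triangle\,U_j\,\triangle\,U_t$, where $\triangle$ is symmetric difference. **The vectors $y^*(S)$ and $\bar y^*(S)$.** For $S\subseteq J$: - $y^*(S)\in\{0,1\}^m$ has coordinate $y^0_p$ for $p\in I$, $1$ for $p\in S$, and $0$ for $p\in J\setminus S$; - $\bar y^*(S)$ has coordinate $y^0_p$ for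 $p\in I$, $0$ for $p\in S$, and $1$ for $p\in J\setminus S$. *)

(* Defs.v *)
From mathcomp Require Import all_boot.
Set Implicit Arguments. Unset Strict Implicit. Unset Printing Implicit Defensive.

(* 0/1 vectors indexed by [m] = 'I_m are boolean finite functions;
   a coordinate is read as a nat (0 or 1) via the bool >-> nat coercion. *)
Notation vec m := {ffun 'I_m -> bool}.

Definition is_graph (m : nat) (e : rel 'I_m) : Prop :=
  symmetric e /\ irreflexive e.

Definition Stable (m : nat) (e : rel 'I_m) (x : vec m) : Prop :=
  forall u v : 'I_m, e u v -> (x u + x v <= 1)%N.

Definition Iset (m : nat) (y0 yb0 : vec m) : {set 'I_m} :=
  [set p | y0 p == yb0 p].
Definition Jset (m : nat) (y0 yb0 : vec m) : {set 'I_m} :=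
  ~: Iset y0 yb0.

Definition Uset (m : nat) (J : {set 'I_m}) (j0 : 'I_m) (y yb : vec m)
  : {set 'I_m} :=
  if y j0 then [set j in J | y j] else [set j in J | yb j].

Definition symdiff (m : nat) (A B : {set 'I_m}) : {set 'I_m} :=
  (A :\: B) :|: (B :\: A).

Definition ystar (m : nat) (y0 : vec m) (J S : {set 'I_m}) : vec m :=
  [ffun p => if p \in J then p \in S else y0 p].
Definition ybarstar (m : nat) (y0 : vec m) (J S : {set 'I_m}) : vec m :=
  [ffun p => if p \in J then p \notin S else y0 p].

(* Main.v *)
Require Import Defs.
From mathcomp Require Import all_boot.

Lemma in_symdiff (m : nat) (A B : {set 'I_m}) x :
  (x \in symdiff A B) = (x \in A) (+) (x \in B).
Proof. by rewrite /symdiff !inE; case: (x \in A); case: (x \in B). Qed.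

Theorem lemma1 (m : nat) (e : rel 'I_m) (k : nat)
  (y yb : 'I_(2 * k).+1 -> vec m) (j0 : 'I_m) :
  is_graph e ->
  (1 <= k)%N ->
  (forall i, Stable e (y i)) ->
  (forall i, Stable e (yb i)) ->
  (* the 4k+2 vectors are pairwise distinct *)
  injective y -> injective yb -> (forall i j, y i != yb j) ->
  (forall i p, (y i p + yb i p = y ord0 p + yb ord0 p)%N) ->
  j0 \in Jset (y ord0) (yb ord0) ->
  let J := Jset (y ord0) (yb ord0) in
  let U := fun i => Uset J j0 (y i) (yb i) in
  forall i j t : 'I_(2 * k).+1, (i < j < t)%N ->
    Stable e (ystar (y ord0) J (symdiff (symdiff (U i) (U j)) (U t))) /\
    Stable e (ybarstar (y ord0) J (symdiff (symdiff (U i) (U j)) (U t))).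
Proof.
move=> _ _ Hy Hyb _ _ _ hsum j0J J U i j t _.
have inJ p : (p \in J) = (y ord0 p != yb ord0 p) by rewrite /J /Jset /Iset !inE.
have ybN s p : p \in J -> yb s p = ~~ y s p.
  rewrite inJ; move: (hsum s p).
  by case: (y s p); case: (yb s p); case: (y ord0 p); case: (yb ord0 p).
have inU s p : (p \in U s) = (p \in J) && (y s p == y s j0).
  rewrite /U /Uset; case pJ: (p \in J).
    case: ifP => H; rewrite inE pJ /= ?(ybN s p pJ) ?H;
      by case: (y s p); case: (y s j0) H.
  by case: ifP; rewrite inE pJ.
have inS p : p \in J -> (p \in symdiff (symdiff (U i) (U j)) (U t)) =
   (y i p == y i j0) (+) (y j p == y j j0) (+) (y t p == y t j0).
  by move=> pJ; rewrite !in_symdiff !inU pJ.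
have edgeJ s u v : e u v -> u \in J -> v \in J -> y s v = ~~ y s u.
  move=> euv uJ vJ; move: (Hy s u v euv) (Hyb s u v euv).
  by rewrite (ybN s u uJ) (ybN s v vJ); case: (y s u); case: (y s v).
have edgeI u v : e u v -> u \in J -> v \notin J -> y ord0 v = false.
  move=> euv; rewrite !inJ negbK; move: (Hy ord0 u v euv) (Hyb ord0 u v euv).
  by case: (y ord0 u); case: (y ord0 v); case: (yb ord0 u); case: (yb ord0 v).
have edgeI' u v : e u v -> v \in J -> u \notin J -> y ord0 u = false.
  move=> euv; rewrite !inJ negbK; move: (Hy ord0 u v euv) (Hyb ord0 u v euv).
  by case: (y ord0 u); case: (y ord0 v); case: (yb ord0 u); case: (yb ord0 v).
split => u v euv; rewrite !ffunE; case uJ: (u \in J); case vJ: (v \in J).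
- rewrite !inS // !(edgeJ _ u v euv uJ vJ).
  by case: (y i u); case: (y j u); case: (y t u); case: (y i j0); case: (y j j0); case: (y t j0).
- by rewrite (edgeI u v euv uJ (negbT vJ)) addn0; case: (_ \in _).
- by rewrite (edgeI' u v euv vJ (negbT uJ)); case: (_ \in _).
- exact: Hy ord0 u v euv.
- rewrite !inS // !(edgeJ _ u v euv uJ vJ).
  by case: (y i u); case: (y j u); case: (y t u); case: (y i j0); case: (y j j0); case: (y t j0).
- by rewrite (edgeI u v euv uJ (negbT vJ)) addn0; case: (_ \in _).
- by rewrite (edgeI' u v euv vJ (negbT uJ)); case: (_ \in _).
- exact: Hy ord0 u v euv.
Qed.
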